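(* Let $B$ be the regular binary rooted tree (the root has degree two and every other vertex has degree three) with simplicial metric $d_B$. Let $Y$ be a connected graph of bounded degree with simplicial metric $d_Y$. Suppose there exist a map $f:VB\to VY$ from the vertex set of $B$ to the vertex set of $Y$ and a constant $C>0$ such that for all vertices $u,v\in VB$ $$\frac1C d_B(u,v)-C\le d_Y(f(u),f(v))\le C\,d_B(u,v)+C.$$ Then $Y$ is transient (the simple random walk on $Y$ returns to its starting vertex with probability strictly less than 1).
   Context: Simplicial metric: path metric on a graph in which every edge has length one. *)

(* Defs.v *)
From Stdlib Require Import Reals List Classical ClassicalEpsilon.
From Coquelicot Require Import Coquelicot.
Import ListNotations.
Open Scope R_scope.

Inductive walkn {V : Type} (adj : V -> V -> Prop) : nat -> V -> V -> Prop :=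
| walk_nil : forall x, walkn adj 0 x x
| walk_cons : forall n x y z, adj x y -> walkn adj n y z -> walkn adj (S n) x z.

(* Simplicial (path) metric: the least length of a walk from u to v
   (defined to be 0 if u and v are not connected; irrelevant for connected graphs). *)
Definition gdist {V : Type} (adj : V -> V -> Prop) (u v : V) : nat :=
  match excluded_middle_informative
          (exists n, walkn adj n u v /\ forall m, walkn adj m u v -> (n <= m)%nat) with
  | left H => proj1_sig (constructive_indefinite_description _ H)
  | right _ => 0%nat
  end.

(* The regular binary rooted tree B: vertices are finite binary words,
   the root is the empty word, and s is joined to s ++ [b] (b = false, true). *)
Definition BVert := list bool.
Definition adjB (s t : BVert) : Prop :=
  (exists b, t = s ++ [b]) \/ (exists b, s = t ++ [b]).
Definition dB (s t : BVert) : nat := gdist adjB s t.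

Definition adj_of {V : Type} (nbrs : V -> list V) (x y : V) : Prop := In y (nbrs x).

Definition simple_graph {V : Type} (nbrs : V -> list V) : Prop :=
  (forall x, NoDup (nbrs x)) /\
  (forall x, ~ In x (nbrs x)) /\
  (forall x y, In y (nbrs x) -> In x (nbrs y)).

Definition connected {V : Type} (nbrs : V -> list V) : Prop :=
  forall u v, exists n, walkn (adj_of nbrs) n u v.

Definition bounded_degree {V : Type} (nbrs : V -> list V) : Prop :=
  exists D : nat, forall x, (length (nbrs x) <= D)%nat.

Definition deg {V : Type} (nbrs : V -> list V) (x : V) : R := INR (length (nbrs x)).

(* first_hit nbrs v n x = probability that the simple random walk started at x
   visits v for the first time at a time >= 1 exactly at step n. *)
Fixpoint first_hit {V : Type} (nbrs : V -> list V) (v : V) (n : nat) (x : V) : R :=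
  match n with
  | O => 0
  | S m =>
      / deg nbrs x *
      fold_right Rplus 0
        (map (fun y => if excluded_middle_informative (y = v)
                       then (match m with O => 1 | S _ => 0 end)
                       else first_hit nbrs v m y) (nbrs x))
  end.

Definition return_prob {V : Type} (nbrs : V -> list V) (v : V) : R :=
  Series (fun n => first_hit nbrs v (S n) v).

Definition transient {V : Type} (nbrs : V -> list V) : Prop :=
  forall v, return_prob nbrs v < 1.

(* Main.v *)
Require Import Defs.
From Stdlib Require Import Reals List Lia Lra Classical ClassicalEpsilon.
From Coquelicot Require Import Coquelicot.
Import ListNotations.
Open Scope R_scope.

Definition sumf {A : Type} (g : A -> R) (l : list A) : R :=
  fold_right (fun a acc => g a + acc) 0 l.

Definition ind (P : Prop) (r : R) : R :=
  if excluded_middle_informative P then r else 0.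

Lemma sumf_nil {A} (g : A -> R) : sumf g [] = 0.
Proof. reflexivity. Qed.
Lemma sumf_cons {A} (g : A -> R) a l : sumf g (a :: l) = g a + sumf g l.
Proof. reflexivity. Qed.
Lemma sumf_app {A} (g : A -> R) l1 l2 : sumf g (l1 ++ l2) = sumf g l1 + sumf g l2.
Proof. induction l1; simpl; [ring|]. unfold sumf in *; simpl. rewrite IHl1; ring. Qed.

Lemma fold_map_sumf {A} (g : A -> R) l : fold_right Rplus 0 (map g l) = sumf g l.
Proof. induction l; simpl; auto. rewrite IHl; reflexivity. Qed.

Lemma sumf_ext {A} (g h : A -> R) l : (forall a, In a l -> g a = h a) -> sumf g l = sumf h l.
Proof. induction l; intros H; simpl; auto. unfold sumf in *; simpl.
  rewrite H by (left; auto). rewrite IHl; auto. intros; apply H; right; auto. Qed.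

Lemma sumf_le {A} (g h : A -> R) l : (forall a, In a l -> g a <= h a) -> sumf g l <= sumf h l.
Proof. induction l; intros H; simpl; [lra|]. unfold sumf in *; simpl.
  assert (g a <= h a) by (apply H; left; auto).
  assert (fold_right (fun a0 acc => g a0 + acc) 0 l <= fold_right (fun a0 acc => h a0 + acc) 0 l)
    by (apply IHl; intros; apply H; right; auto). lra. Qed.

Lemma sumf_nonneg {A} (g : A -> R) l : (forall a, In a l -> 0 <= g a) -> 0 <= sumf g l.
Proof. induction l; intros H; simpl; [lra|]. unfold sumf in *; simpl.
  assert (0 <= g a) by (apply H; left; auto).
  assert (0 <= fold_right (fun a0 acc => g a0 + acc) 0 l) by (apply IHl; intros; apply H; right; auto). lra. Qed.

Lemma sumf_nonpos {A} (g : A -> R) l : (forall a, In a l -> g a <= 0) -> sumf g l <= 0.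
Proof. induction l; intros H; simpl; [lra|]. unfold sumf in *; simpl.
  assert (g a <= 0) by (apply H; left; auto).
  assert (fold_right (fun a0 acc => g a0 + acc) 0 l <= 0) by (apply IHl; intros; apply H; right; auto). lra. Qed.

Lemma sumf_plus {A} (g h : A -> R) l : sumf (fun a => g a + h a) l = sumf g l + sumf h l.
Proof. induction l; simpl; [ring|]. unfold sumf in *; simpl. rewrite IHl; ring. Qed.

Lemma sumf_scal {A} (c : R) (g : A -> R) l : sumf (fun a => c * g a) l = c * sumf g l.
Proof. induction l; simpl; [ring|]. unfold sumf in *; simpl. rewrite IHl; ring. Qed.

Lemma sumf_const {A} (c : R) (l : list A) : sumf (fun _ => c) l = INR (length l) * c.
Proof. induction l. - unfold sumf; simpl; ring.
  - replace (sumf (fun _ => c) (a::l)) with (c + sumf (fun _ => c) l) by reflexivity. rewrite IHl.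
    change (length (a::l)) with (S (length l)). rewrite S_INR. ring. Qed.

Lemma sumf_minus {A} (g h : A -> R) l : sumf (fun a => g a - h a) l = sumf g l - sumf h l.
Proof. induction l; simpl; [ring|]. unfold sumf in *; simpl. rewrite IHl; ring. Qed.

Lemma sumf_swap {A B} (g : A -> B -> R) l1 l2 :
  sumf (fun a => sumf (fun b => g a b) l2) l1 = sumf (fun b => sumf (fun a => g a b) l1) l2.
Proof. induction l1; simpl.
  - symmetry. apply (eq_trans (sumf_ext _ (fun _ => 0) _ (fun _ _ => eq_refl))).
    rewrite sumf_const; ring.
  - replace (sumf (fun a0 => sumf (fun b => g a0 b) l2) (a :: l1)) with
      (sumf (fun b => g a b) l2 + sumf (fun a0 => sumf (fun b => g a0 b) l2) l1) by reflexivity.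
    rewrite IHl1. rewrite <- sumf_plus. apply sumf_ext. intros; reflexivity. Qed.

Lemma in_le_sumf {A} (g : A -> R) l a : (forall b, In b l -> 0 <= g b) -> In a l -> g a <= sumf g l.
Proof. induction l; intros H Ha; simpl in *; [tauto|]. unfold sumf in *; simpl.
  destruct Ha as [<-|Ha].
  - assert (0 <= fold_right (fun a0 acc => g a0 + acc) 0 l) by (apply sumf_nonneg; auto). lra.
  - assert (0 <= g a0) by auto. assert (g a <= fold_right (fun a0 acc => g a0 + acc) 0 l) by auto. lra. Qed.

Lemma sumf_ind_eq {A} (S : list A) (g : A -> R) a : NoDup S ->
  sumf (fun z => ind (z = a) (g z)) S = ind (In a S) (g a).
Proof. intros HS; induction HS as [|x l Hx HS IHHS]; simpl.
  - unfold ind; destruct excluded_middle_informative; [tauto|reflexivity].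
  - unfold sumf in *; simpl. rewrite IHHS. unfold ind.
    destruct (excluded_middle_informative (x = a)) as [e|n];
    destruct (excluded_middle_informative (In a l)) as [i|n'];
    destruct (excluded_middle_informative (x = a \/ In a l)); try tauto; try ring; subst; try tauto; try ring. Qed.

Lemma sumf_nonpos_but {A} (S : list A) (h : A -> R) v : NoDup S -> In v S ->
  (forall x, In x S -> x <> v -> h x <= 0) -> sumf h S <= h v.
Proof. intros HS; induction HS as [|x l Hx HS IHHS]; intros Hv H; simpl in *; [tauto|]. unfold sumf in *; simpl.
  destruct Hv as [<-|Hv].
  - assert (fold_right (fun a acc => h a + acc) 0 l <= 0).
    { apply sumf_nonpos. intros a Ha. apply H; auto. intros ->; tauto. } lra.
  - assert (h x <= 0). { apply H; auto. intros ->; tauto. }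
    assert (fold_right (fun a acc => h a + acc) 0 l <= h v) by auto. lra. Qed.

Lemma sumf_restrict {A} (l S : list A) (phi : A -> R) : NoDup l -> NoDup S ->
  (forall y, In y l -> phi y <> 0 -> In y S) ->
  sumf phi l = sumf (fun y => ind (In y l) (phi y)) S.
Proof. intros Hl HS; induction Hl as [|x l Hx Hl IHHl]; intros H.
  - symmetry. rewrite (sumf_ext _ (fun _ => 0)). rewrite sumf_const; simpl; ring.
    intros y _; unfold ind; destruct excluded_middle_informative; simpl in *; tauto.
  - simpl. unfold sumf at 1; simpl. fold (sumf phi l). rewrite IHHl by (intros; apply H; simpl; auto).
    transitivity (sumf (fun y => ind (y = x) (phi y)) S + sumf (fun y => ind (In y l) (phi y)) S).
    + f_equal. rewrite sumf_ind_eq by auto. unfold ind; destruct excluded_middle_informative; auto.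
      destruct (Req_dec (phi x) 0); auto. exfalso; apply n; apply H; simpl; auto.
    + rewrite <- sumf_plus. apply sumf_ext. intros y _. unfold ind.
      destruct (excluded_middle_informative (y = x)) as [e|n];
      destruct (excluded_middle_informative (In y l));
      destruct (excluded_middle_informative (x = y \/ In y l)); subst; try tauto; try ring.
      destruct o; subst; tauto. Qed.
Lemma walkn_app {V} (adj : V -> V -> Prop) n m x y z :
  walkn adj n x y -> walkn adj m y z -> walkn adj (n + m) x z.
Proof. induction 1 as [|n0 a b c Hab Hw IH]; intros H2; simpl; auto. econstructor; eauto. Qed.

Lemma walkn_snoc {V} (adj : V -> V -> Prop) n x y z :
  walkn adj n x y -> adj y z -> walkn adj (S n) x z.
Proof. intros H1 H2. replace (S n) with (n + 1)%nat by lia. eapply walkn_app; eauto.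
  econstructor; eauto. constructor. Qed.

Lemma walkn_rev {V} (adj : V -> V -> Prop) n x y :
  (forall a b, adj a b -> adj b a) -> walkn adj n x y -> walkn adj n y x.
Proof. intros Hs Hw; induction Hw. constructor. eapply walkn_snoc; eauto. Qed.

Lemma min_exists (P : nat -> Prop) n : P n -> exists m, P m /\ forall k, P k -> (m <= k)%nat.
Proof. revert P. induction n as [n IH] using (well_founded_induction Wf_nat.lt_wf). intros P Hn.
  destruct (classic (exists k, (k < n)%nat /\ P k)) as [[k [Hk Pk]]|Hno].
  - exact (IH k Hk P Pk).
  - exists n; split; auto. intros k Pk. destruct (Nat.lt_ge_cases k n); auto.
    exfalso; apply Hno; eauto. Qed.

Lemma gdist_spec {V} (adj : V -> V -> Prop) n u v : walkn adj n u v ->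
  walkn adj (gdist adj u v) u v /\ forall m, walkn adj m u v -> (gdist adj u v <= m)%nat.
Proof. intros Hw. destruct (min_exists (fun m => walkn adj m u v) n Hw) as [m [Hm Hmin]].
  unfold gdist. destruct excluded_middle_informative as [e|ne].
  - destruct (constructive_indefinite_description _ e) as [k [Hk Hkmin]]. simpl. auto.
  - exfalso; apply ne; eauto. Qed.

Lemma gdist_le {V} (adj : V -> V -> Prop) n u v : walkn adj n u v -> (gdist adj u v <= n)%nat.
Proof. intros H. apply (gdist_spec adj n u v H); auto. Qed.

Lemma gdist_walk {V} (adj : V -> V -> Prop) n u v : walkn adj n u v -> walkn adj (gdist adj u v) u v.
Proof. intros H. apply (gdist_spec adj n u v H). Qed.

Fixpoint ball {V} (nb : V -> list V) (x : V) (r : nat) : list V :=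
  match r with
  | O => [x]
  | S r' => ball nb x r' ++ flat_map nb (ball nb x r')
  end.

Lemma ball_mono {V} (nb : V -> list V) x r r' y : (r <= r')%nat -> In y (ball nb x r) -> In y (ball nb x r').
Proof. induction 1; auto. intros H1; simpl. apply in_or_app; left; auto. Qed.

Lemma ball_step {V} (nb : V -> list V) x r y z : In y (ball nb x r) -> In z (nb y) -> In z (ball nb x (S r)).
Proof. intros H1 H2; simpl. apply in_or_app; right. apply in_flat_map; eauto. Qed.

Lemma walk_ball {V} (nb : V -> list V) (adj : V -> V -> Prop) :
  (forall a b, adj a b -> In b (nb a)) ->
  forall n a y, walkn adj n a y -> forall x r, In a (ball nb x r) -> In y (ball nb x (r + n)).
Proof. intros Hadj n a y Hw. induction Hw as [|n0 a b c Hab Hw IH]; intros x0 r Ha.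
  - rewrite Nat.add_0_r; auto.
  - replace (r + S n0)%nat with (S r + n0)%nat by lia. apply IH. eapply ball_step; eauto. Qed.

Lemma walk_ball0 {V} (nb : V -> list V) (adj : V -> V -> Prop) :
  (forall a b, adj a b -> In b (nb a)) ->
  forall n x y, walkn adj n x y -> In y (ball nb x n).
Proof. intros Hadj n x y H. apply (walk_ball nb adj Hadj n x y H x 0). simpl; auto. Qed.

Lemma ball_walk {V} (nb : V -> list V) x r y : In y (ball nb x r) ->
  exists n, (n <= r)%nat /\ walkn (adj_of nb) n x y.
Proof. revert y; induction r; intros y H; simpl in H.
  - destruct H as [<-|[]]. exists 0%nat; split; auto. constructor.
  - apply in_app_or in H. destruct H as [H|H].
    + destruct (IHr y H) as [n [Hn Hw]]. exists n; split; auto.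
    + apply in_flat_map in H. destruct H as [z [Hz Hy]].
      destruct (IHr z Hz) as [n [Hn Hw]]. exists (S n); split; [lia|].
      eapply walkn_snoc; eauto. Qed.

Lemma ball_length {V} (nb : V -> list V) (D : nat) x r :
  (forall a, (length (nb a) <= D)%nat) -> (length (ball nb x r) <= (D + 1) ^ r)%nat.
Proof. intros HD. induction r. simpl; lia. cbn [ball]. rewrite length_app. rewrite Nat.pow_succ_r'.
  assert (length (flat_map nb (ball nb x r)) <= D * length (ball nb x r))%nat.
  { clear IHr. induction (ball nb x r) as [|a l IH]; [simpl; lia|].
    change (flat_map nb (a::l)) with (nb a ++ flat_map nb l). rewrite length_app. cbn [length].
    specialize (HD a). nia. }
  nia. Qed.

Definition nbrsB (s : BVert) : list BVert :=
  (s ++ [false]) :: (s ++ [true]) :: match s with [] => [] | _ :: _ => [removelast s] end.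

Lemma nbrsB_length s : (length (nbrsB s) <= 3)%nat.
Proof. unfold nbrsB; destruct s; simpl; lia. Qed.

Lemma adjB_nbrsB s t : adjB s t -> In t (nbrsB s).
Proof. intros [[b ->]|[b ->]]; unfold nbrsB.
  - destruct b; simpl; auto.
  - right; right. destruct t as [|a t]; simpl; left; auto.
    change (removelast ((a :: t) ++ [b]) = a :: t). apply removelast_last. Qed.

Lemma adjB_sym s t : adjB s t -> adjB t s.
Proof. unfold adjB; tauto. Qed.

Lemma walk_root s : walkn adjB (length s) [] s.
Proof. induction s as [|b s IH] using rev_ind. constructor.
  rewrite length_app; simpl. rewrite Nat.add_1_r. eapply walkn_snoc; eauto. left; eauto. Qed.

Lemma tree_conn s t : exists n, walkn adjB n s t.
Proof. exists (length s + length t)%nat. eapply walkn_app. apply walkn_rev. apply adjB_sym. apply walk_root.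
  apply walk_root. Qed.

Lemma dB_walk s t : walkn adjB (dB s t) s t.
Proof. destruct (tree_conn s t) as [n H]. unfold dB. eapply gdist_walk; eauto. Qed.

Lemma dB_child t b : (dB t (t ++ [b]) <= 1)%nat.
Proof. unfold dB. apply (gdist_le _ 1). econstructor. left; eauto. constructor. Qed.

Lemma walkB_length n a b : walkn adjB n a b -> (length b <= length a + n)%nat.
Proof. induction 1 as [|n0 x y z Hxy Hw IH]. lia.
  destruct Hxy as [[c ->]|[c ->]]; rewrite ?length_app in *; simpl in *; lia. Qed.

Lemma dB_root_ge s : (length s <= dB [] s)%nat.
Proof. pose proof (walkB_length _ _ _ (dB_walk [] s)). simpl in H. lia. Qed.

Lemma in_TB t s : In s (ball nbrsB t (dB t s)).
Proof. apply (walk_ball0 nbrsB adjB adjB_nbrsB). apply dB_walk. Qed.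

Section RW.
Variable V : Type.
Variable nbrs : V -> list V.
Variable v : V.

Fixpoint U (N : nat) (x : V) : R :=
  match N with O => 0 | S N' => U N' x + first_hit nbrs v (S N') x end.

Definition W (N : nat) (y : V) : R := if excluded_middle_informative (y = v) then 1 else U N y.

Lemma deg_nonneg x : 0 <= deg nbrs x.
Proof. unfold deg. apply pos_INR. Qed.

Lemma inv_deg_nonneg x : 0 <= / deg nbrs x.
Proof. destruct (Req_dec (deg nbrs x) 0) as [e|n]. rewrite e, Rinv_0; lra.
  apply Rlt_le, Rinv_pos. pose proof (deg_nonneg x); lra. Qed.

Lemma fh_nonneg n x : 0 <= first_hit nbrs v n x.
Proof. revert x; induction n; intros x; simpl. lra.
  apply Rmult_le_pos. apply inv_deg_nonneg. rewrite fold_map_sumf. apply sumf_nonneg.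
  intros a _. destruct excluded_middle_informative. destruct n; lra. auto. Qed.

Lemma U_nonneg N x : 0 <= U N x.
Proof. induction N; cbn [U]. lra. pose proof (fh_nonneg (S N) x); lra. Qed.

Lemma U_mono N x : U N x <= U (S N) x.
Proof. cbn [U]. pose proof (fh_nonneg (S N) x); lra. Qed.

Lemma W_nonneg N y : 0 <= W N y.
Proof. unfold W; destruct excluded_middle_informative. lra. apply U_nonneg. Qed.

Lemma U_rec N x : U (S N) x = / deg nbrs x * sumf (W N) (nbrs x).
Proof. induction N.
  - cbn [U first_hit]. rewrite fold_map_sumf. rewrite Rplus_0_l. f_equal; apply sumf_ext; intros y _;
    unfold W; destruct excluded_middle_informative; reflexivity.
  - change (U (S (S N)) x) with (U (S N) x + first_hit nbrs v (S (S N)) x). rewrite IHN.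
    cbn [first_hit]. rewrite fold_map_sumf. rewrite <- Rmult_plus_distr_l, <- sumf_plus. f_equal.
    apply sumf_ext. intros y _. unfold W. destruct excluded_middle_informative. ring. simpl. ring. Qed.

Lemma sumf_nz {A} (g : A -> R) l : sumf g l <> 0 -> exists a, In a l /\ g a <> 0.
Proof. induction l; simpl. intros H; exfalso; apply H; reflexivity.
  unfold sumf; simpl. fold (sumf g l). intros H. destruct (Req_dec (g a) 0) as [e|n].
  - destruct IHl as [b [Hb Hgb]]. rewrite e in H. lra. eauto.
  - eauto. Qed.

Lemma fh_support n x : first_hit nbrs v n x <> 0 -> walkn (adj_of nbrs) n x v.
Proof. revert x; induction n; intros x H; simpl in H. lra.
  rewrite fold_map_sumf in H. destruct (sumf_nz _ _ (fun e => H (ltac:(rewrite e; ring)))) as [y [Hy Hg]].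
  destruct excluded_middle_informative as [e|ne].
  - destruct n. subst. econstructor; eauto. constructor. lra.
  - econstructor; eauto. Qed.

Lemma U_support N x : U N x <> 0 -> exists n, (n <= N)%nat /\ walkn (adj_of nbrs) n x v.
Proof. induction N; cbn [U]; intros H. lra.
  destruct (Req_dec (first_hit nbrs v (S N) x) 0) as [e|ne].
  - rewrite e in H. destruct IHN as [n [Hn Hw]]. lra. exists n; split; auto.
  - exists (S N); split; auto. apply fh_support; auto. Qed.

End RW.

Section Green.
Variable V : Type.
Variable nbrs : V -> list V.
Hypothesis Hsimple : simple_graph nbrs.
Variable SS : list V.
Hypothesis HS : NoDup SS.

Lemma nbrs_sym x y : In y (nbrs x) -> In x (nbrs y).
Proof. apply Hsimple. Qed.

Lemma swap_sum (phi : V -> V -> R) :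
  (forall x y, In y (nbrs x) -> phi y x <> 0 -> In y SS /\ In x SS) ->
  sumf (fun x => sumf (fun y => phi y x) (nbrs x)) SS = sumf (fun y => sumf (fun x => phi y x) (nbrs y)) SS.
Proof. intros H.
  transitivity (sumf (fun x => sumf (fun y => ind (In y (nbrs x)) (phi y x)) SS) SS).
  { apply sumf_ext. intros x Hx. apply sumf_restrict; auto. apply Hsimple.
    intros y Hy Hp. apply (H x y Hy Hp). }
  rewrite sumf_swap.
  apply sumf_ext. intros y Hy. symmetry. rewrite sumf_restrict with (S := SS); auto.
  2: apply Hsimple.
  2: { intros x Hx Hp. apply (H x y); auto. apply nbrs_sym; auto. }
  apply sumf_ext. intros x _. unfold ind.
  destruct (excluded_middle_informative (In x (nbrs y))), (excluded_middle_informative (In y (nbrs x)));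
    auto; exfalso; eauto using nbrs_sym. Qed.

Variable v : V.
Variable N : nat.
Hypothesis HSball : forall x, In x (ball nbrs v (S N)) -> In x SS.

Definition w := W V nbrs v N.
Definition G (x : V) := sumf (fun y => (w x - w y)^2) (nbrs x).
Definition Dir := sumf G SS.

Lemma w_supp y : w y <> 0 -> In y (ball nbrs v N).
Proof. unfold w, W. destruct excluded_middle_informative as [e|ne]; intros H.
  - subst. apply (ball_mono _ _ 0); [lia|]. simpl; auto.
  - destruct (U_support V nbrs v N y H) as [n [Hn Hw]].
    apply (ball_mono _ _ n); auto. apply (walk_ball0 nbrs (adj_of nbrs)); auto.
    apply walkn_rev; auto. intros a b; apply nbrs_sym. Qed.

Lemma G_nonneg x : 0 <= G x.
Proof. apply sumf_nonneg. intros; apply pow2_ge_0. Qed.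

Lemma G_out x : ~ In x SS -> G x = 0.
Proof. intros Hx. unfold G. rewrite (sumf_ext _ (fun _ => 0)). rewrite sumf_const; ring.
  intros y Hy. assert (w x = 0).
  { destruct (Req_dec (w x) 0); auto. exfalso; apply Hx, HSball. apply (ball_mono _ _ N); auto. apply w_supp; auto. }
  assert (w y = 0).
  { destruct (Req_dec (w y) 0); auto. exfalso; apply Hx, HSball. eapply ball_step. apply w_supp; eauto.
    apply nbrs_sym; auto. }
  rewrite H, H0; ring. Qed.

Lemma G_le_Dir x : G x <= Dir.
Proof. destruct (classic (In x SS)). apply in_le_sumf; auto. intros; apply G_nonneg.
  rewrite G_out; auto. apply sumf_nonneg; intros; apply G_nonneg. Qed.

Lemma subharm x : deg nbrs x * U V nbrs v N x <= sumf (W V nbrs v N) (nbrs x).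
Proof. destruct (Req_dec (deg nbrs x) 0) as [e|ne].
  - rewrite e, Rmult_0_l. apply sumf_nonneg. intros; apply W_nonneg.
  - pose proof (U_mono V nbrs v N x). rewrite U_rec in H.
    pose proof (deg_nonneg V nbrs x).
    apply Rmult_le_compat_l with (r := deg nbrs x) in H; auto.
    rewrite <- Rmult_assoc, Rinv_r, Rmult_1_l in H; auto. Qed.

Lemma Dir_bound : In v SS -> deg nbrs v <> 0 -> Dir <= 2 * deg nbrs v * (1 - U V nbrs v (Datatypes.S N) v).
Proof. intros Hv Hd.
  assert (E1 : Dir = sumf (fun x => sumf (fun y => w x * (w x - w y)) (nbrs x)) SS
                   + sumf (fun x => sumf (fun y => w y * (w y - w x)) (nbrs x)) SS).
  { unfold Dir, G. rewrite <- sumf_plus. apply sumf_ext; intros x _. rewrite <- sumf_plus.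
    apply sumf_ext; intros; ring. }
  rewrite (swap_sum (fun y x => w y * (w y - w x))) in E1.
  2: { intros x y Hy Hp. assert (w y <> 0) by (intro e; apply Hp; rewrite e; ring).
       split; apply HSball. apply (ball_mono _ _ N); auto. apply w_supp; auto.
       eapply ball_step. apply w_supp; eauto. apply nbrs_sym; auto. }
  assert (E2 : Dir = 2 * sumf (fun x => w x * (deg nbrs x * w x - sumf w (nbrs x))) SS).
  { rewrite E1. rewrite <- sumf_plus. rewrite <- sumf_scal. apply sumf_ext; intros x _.
    rewrite <- sumf_plus. rewrite sumf_plus. rewrite (sumf_scal (w x) (fun a => w x - w a)).
    rewrite sumf_minus, sumf_const. unfold deg. ring. }
  rewrite E2, Rmult_assoc. apply Rmult_le_compat_l; [lra|].
  eapply Rle_trans. apply (sumf_nonpos_but _ _ v); auto.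
  - intros x Hx Hxv. assert (Hw : w x = U V nbrs v N x).
    { unfold w, W. destruct excluded_middle_informative; tauto. }
    rewrite Hw. pose proof (U_nonneg V nbrs v N x). pose proof (subharm x). unfold w in *. nra.
  - assert (Hw : w v = 1). { unfold w, W. destruct excluded_middle_informative; tauto. }
    rewrite Hw. pose proof (U_rec V nbrs v N v). fold w in H.
    assert (deg nbrs v * U V nbrs v (Datatypes.S N) v = sumf w (nbrs v)).
    { rewrite H. field. auto. }
    nra.
Qed.

End Green.

Definition cnt {B} (z : B) (l : list B) : R := sumf (fun x => ind (z = x) 1) l.

Lemma sumf_as_cnt {B} (SS l : list B) (g : B -> R) : NoDup SS -> (forall x, ~ In x SS -> g x = 0) ->
  sumf g l = sumf (fun z => g z * cnt z l) SS.
Proof. intros HS Hg.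
  transitivity (sumf (fun x => sumf (fun z => ind (z = x) (g z)) SS) l).
  { apply sumf_ext. intros x _. rewrite sumf_ind_eq; auto. unfold ind.
    destruct excluded_middle_informative; [reflexivity|]. rewrite Hg; auto. }
  rewrite sumf_swap. apply sumf_ext. intros z _. unfold cnt. rewrite <- sumf_scal.
  apply sumf_ext. intros x _. unfold ind. destruct excluded_middle_informative; ring. Qed.

Lemma count_bound {A B} (T : list A) (Bl : A -> list B) (SS : list B) (g : B -> R) (M : R) :
  NoDup SS -> (forall x, ~ In x SS -> g x = 0) -> (forall x, 0 <= g x) ->
  (forall z, sumf (fun s => cnt z (Bl s)) T <= M) ->
  sumf (fun s => sumf g (Bl s)) T <= M * sumf g SS.
Proof. intros HS Hg Hpos HM.
  assert (E : sumf (fun s => sumf g (Bl s)) T = sumf (fun s => sumf (fun z => g z * cnt z (Bl s)) SS) T).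
  { apply sumf_ext. intros s _. apply sumf_as_cnt; auto. }
  rewrite E.
  rewrite sumf_swap. rewrite <- (sumf_scal M g SS). apply sumf_le. intros z _.
  rewrite (sumf_scal (g z) (fun s => cnt z (Bl s))). rewrite Rmult_comm.
  apply Rmult_le_compat_r; auto. Qed.

Lemma cnt_le {B} (z : B) l : cnt z l <= ind (In z l) (INR (length l)).
Proof. unfold ind. destruct excluded_middle_informative as [i|n].
  - unfold cnt. rewrite <- (Rmult_1_r (INR (length l))), <- sumf_const. apply sumf_le.
    intros; unfold ind; destruct excluded_middle_informative; lra.
  - unfold cnt. rewrite (sumf_ext _ (fun _ => 0)). rewrite sumf_const; lra.
    intros x Hx; unfold ind; destruct excluded_middle_informative; subst; tauto. Qed.

Definition bdec (P : Prop) : bool := if excluded_middle_informative P then true else false.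

Lemma sumf_ind_filter {A} (P : A -> Prop) (c : R) T :
  sumf (fun s => ind (P s) c) T = INR (length (filter (fun s => bdec (P s)) T)) * c.
Proof. induction T as [|a T IH]. simpl; unfold sumf; simpl; ring.
  replace (sumf (fun s => ind (P s) c) (a :: T)) with (ind (P a) c + sumf (fun s => ind (P s) c) T) by reflexivity.
  rewrite IH. unfold ind, bdec. cbn [filter]. destruct excluded_middle_informative.
  - cbn [length]. rewrite S_INR. ring.
  - ring. Qed.

Lemma filter_len {A} (g : A -> bool) T l0 : NoDup T -> (forall s, In s (filter g T) -> In s l0) ->
  (length (filter g T) <= length l0)%nat.
Proof. intros HT H. apply NoDup_incl_length. apply NoDup_filter; auto. intros x; apply H. Qed.

Fixpoint Sub (t : BVert) (k : nat) : list BVert :=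
  match k with O => [] | S k' => t :: Sub (t ++ [false]) k' ++ Sub (t ++ [true]) k' end.

Lemma Sub_form k : forall t s, In s (Sub t k) -> exists r, s = t ++ r /\ (length r < k)%nat.
Proof. induction k; intros t s H; simpl in H. tauto.
  destruct H as [<-|H]. exists []; split. rewrite app_nil_r; auto. simpl; lia.
  apply in_app_or in H. destruct H as [H|H]; apply IHk in H; destruct H as [r [-> Hr]];
  [exists (false :: r)|exists (true :: r)]; rewrite <- app_assoc; simpl; split; auto; lia. Qed.

Lemma Sub_NoDup k : forall t, NoDup (Sub t k).
Proof. induction k; intros t; simpl. constructor. constructor.
  - intros H. apply in_app_or in H. destruct H as [H|H]; apply Sub_form in H; destruct H as [r [Hr _]];
    apply (f_equal (@length bool)) in Hr; rewrite !length_app in Hr; simpl in Hr; lia.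
  - apply NoDup_app; auto. intros a Ha Hb. apply Sub_form in Ha, Hb.
    destruct Ha as [r1 [-> _]], Hb as [r2 [E _]]. rewrite <- !app_assoc in E.
    apply app_inv_head in E. simpl in E. discriminate. Qed.

Lemma amgm d t : 0 < t -> d <= (t + d^2 / t) / 2.
Proof. intros Ht. replace ((t + d^2/t)/2) with (d + (t - d)^2 / (2 * t)) by (field; lra).
  assert (0 <= (t - d)^2 / (2 * t)). { apply Rdiv_le_0_compat. apply pow2_ge_0. lra. } lra. Qed.

Lemma qi_low (C x y : R) : 0 < C -> / C * x - C <= y -> x <= C * (y + C).
Proof. intros HC H. assert (/ C * x <= y + C) by lra.
  apply Rmult_le_compat_l with (r := C) in H0; [|lra]. rewrite <- Rmult_assoc, Rinv_r, Rmult_1_l in H0; lra. Qed.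

Lemma walk_first {V} (adj : V -> V -> Prop) n x y : walkn adj n x y -> x <> y -> exists z, adj x z.
Proof. destruct 1; [tauto|eauto]. Qed.

Section Main.
Variable V : Type.
Variable nbrs : V -> list V.
Hypothesis Hsimple : simple_graph nbrs.
Hypothesis Hconn : connected nbrs.
Variable f : BVert -> V.
Variable C : R.
Hypothesis HC : 0 < C.
Hypothesis Hqi : forall u v : BVert,
      / C * INR (dB u v) - C <= INR (gdist (adj_of nbrs) (f u) (f v)) /\
      INR (gdist (adj_of nbrs) (f u) (f v)) <= C * INR (dB u v) + C.
Variable D : nat.
Hypothesis HD : forall x, (length (nbrs x) <= D)%nat.
Variable L : nat.
Hypothesis HL : 2 * C <= INR L.
Variable R0 : nat.
Hypothesis HR0 : C * (2 * INR L + C) <= INR R0.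

Lemma symY a b : adj_of nbrs a b -> adj_of nbrs b a.
Proof. apply Hsimple. Qed.

Lemma dY_walk x y : walkn (adj_of nbrs) (gdist (adj_of nbrs) x y) x y.
Proof. destruct (Hconn x y) as [n H]. eapply gdist_walk; eauto. Qed.

Lemma child_dist t b : (gdist (adj_of nbrs) (f t) (f (t ++ [b])) <= L)%nat.
Proof. destruct (Hqi t (t ++ [b])) as [_ H]. pose proof (dB_child t b) as Hd.
  apply le_INR in Hd. simpl in Hd. apply INR_le. assert (C * INR (dB t (t ++ [b])) <= C * 1)
  by (apply Rmult_le_compat_l; lra). lra. Qed.

Lemma qi_close t0 s z : In z (ball nbrs (f t0) L) -> In z (ball nbrs (f s) L) -> In s (ball nbrsB t0 R0).
Proof. intros H1 H2. destruct (ball_walk _ _ _ _ H1) as [n1 [Hn1 W1]].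
  destruct (ball_walk _ _ _ _ H2) as [n2 [Hn2 W2]].
  assert (Wt : walkn (adj_of nbrs) (n1 + n2) (f t0) (f s)).
  { eapply walkn_app; eauto. apply walkn_rev; auto. apply symY. }
  apply gdist_le in Wt. destruct (Hqi t0 s) as [Hl _]. apply le_INR in Wt. rewrite plus_INR in Wt.
  apply le_INR in Hn1. apply le_INR in Hn2.
  assert (INR (dB t0 s) <= INR R0).
  { apply qi_low in Hl; auto. eapply Rle_trans; [apply Hl|]. eapply Rle_trans; [|apply HR0].
    apply Rmult_le_compat_l; lra. }
  apply INR_le in H. apply (ball_mono _ _ (dB t0 s)); auto. apply in_TB. Qed.

Variable v : V.
Variable N : nat.

Definition SS := nodup (fun x y => excluded_middle_informative (x = y)) (ball nbrs v (S N)).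
Lemma SS_nodup : NoDup SS. Proof. apply NoDup_nodup. Qed.
Lemma SS_ball x : In x (ball nbrs v (S N)) -> In x SS. Proof. intros; apply nodup_In; auto. Qed.

Notation ww := (w V nbrs v N).
Notation GG := (G V nbrs v N).
Notation DD := (Dir V nbrs SS v N).

Lemma walk_est x0 Hb L0 : (forall a, In a (ball nbrs x0 L0) -> GG a <= Hb) ->
  forall tau, 0 < tau ->
  forall n a y, walkn (adj_of nbrs) n a y -> forall r, In a (ball nbrs x0 r) -> (r + n <= L0)%nat ->
  ww a - ww y <= INR n * ((tau + Hb / tau) / 2).
Proof. intros HG tau Ht n a y Hw. induction Hw as [|n0 a b c Hab Hw IH]; intros r Ha Hr.
  - simpl; lra.
  - assert (Hb' : In b (ball nbrs x0 (S r))) by (eapply ball_step; eauto).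
    specialize (IH (S r) Hb' ltac:(lia)).
    assert (Hd : ww a - ww b <= (tau + Hb / tau) / 2).
    { eapply Rle_trans. apply amgm; eauto.
      assert ((ww a - ww b)^2 <= Hb).
      { assert (GG a <= Hb) by (apply HG; apply (ball_mono _ _ r); [lia|auto]).
        eapply Rle_trans; [|apply H]. unfold G. apply (in_le_sumf (fun y => (ww a - ww y)^2)); auto. intros; apply pow2_ge_0. }
      unfold Rdiv. apply Rmult_le_compat_r; [lra|]. apply Rplus_le_compat_l.
      apply Rmult_le_compat_r; auto. left; apply Rinv_pos; auto. }
    rewrite S_INR. lra. Qed.

Definition Hs (s : BVert) := sumf GG (ball nbrs (f s) L).
Definition cc (s : BVert) := INR L * Hs s.

Lemma Hs_nonneg s : 0 <= Hs s. Proof. apply sumf_nonneg; intros; apply G_nonneg. Qed.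
Lemma cc_nonneg s : 0 <= cc s. Proof. unfold cc. apply Rmult_le_pos. apply pos_INR. apply Hs_nonneg. Qed.

Lemma edge_est t b tau : 0 < tau -> ww (f t) - ww (f (t ++ [b])) <= (tau * INR L + cc t / tau) / 2.
Proof. intros Ht. pose proof (dY_walk (f t) (f (t ++ [b]))) as Hw.
  pose proof (walk_est (f t) (Hs t) L) as E.
  assert (HG : forall a, In a (ball nbrs (f t) L) -> GG a <= Hs t).
  { intros a Ha. apply in_le_sumf; auto. intros; apply G_nonneg. }
  specialize (E HG tau Ht _ _ _ Hw 0%nat ltac:(simpl; auto) ltac:(simpl; apply child_dist)).
  eapply Rle_trans; [apply E|].
  pose proof (child_dist t b) as Hc. apply le_INR in Hc.
  assert (0 <= (tau + Hs t / tau) / 2).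
  { pose proof (Hs_nonneg t). assert (0 <= Hs t / tau) by (apply Rdiv_le_0_compat; lra). lra. }
  eapply Rle_trans. apply Rmult_le_compat_r; eauto. right. unfold cc. field. lra. Qed.

Lemma greedy k : forall t tau, 0 < tau -> (forall s, length s = (length t + k)%nat -> ww (f s) = 0) ->
  ww (f t) <= 2 * tau * INR L + sumf cc (Sub t k) / tau.
Proof. induction k; intros t tau Ht Hleaf.
  - rewrite Hleaf by lia. simpl. unfold sumf; simpl. pose proof (pos_INR L).
    assert (0/tau = 0) by (field; lra). nra.
  - set (E0 := sumf cc (Sub (t ++ [false]) k)). set (E1 := sumf cc (Sub (t ++ [true]) k)).
    assert (HE : sumf cc (Sub t (S k)) = cc t + E0 + E1).
    { change (Sub t (S k)) with (t :: (Sub (t ++ [false]) k ++ Sub (t ++ [true]) k)).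
      rewrite sumf_cons, sumf_app. unfold E0, E1; ring. }
    assert (HE0 : 0 <= E0) by (apply sumf_nonneg; intros; apply cc_nonneg).
    assert (HE1 : 0 <= E1) by (apply sumf_nonneg; intros; apply cc_nonneg).
    pose proof (cc_nonneg t) as Hct.
    assert (Hb : exists b, sumf cc (Sub (t ++ [b]) k) <= (E0 + E1) / 2).
    { destruct (Rle_dec E0 E1); [exists false|exists true]; fold E0 E1; lra. }
    destruct Hb as [b Hb].
    assert (Ht' : 0 < 3 * tau / 4) by lra.
    specialize (IHk (t ++ [b]) (3 * tau / 4) Ht').
    assert (IH : ww (f (t ++ [b])) <= 2 * (3 * tau / 4) * INR L + sumf cc (Sub (t ++ [b]) k) / (3 * tau / 4)).
    { apply IHk. intros s Hs'. apply Hleaf. rewrite Hs', length_app; simpl; lia. }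
    pose proof (edge_est t b tau Ht) as Hed.
    rewrite HE. set (Eb := sumf cc (Sub (t ++ [b]) k)) in *.
    assert (Hq : Eb / (3 * tau / 4) = (4/3) * Eb / tau) by (field; lra).
    assert (Hk : cc t / (2 * tau) + (4/3) * Eb / tau <= (cc t + E0 + E1) / tau).
    { replace (cc t / (2 * tau) + (4/3) * Eb / tau) with ((cc t / 2 + (4/3) * Eb) / tau) by (field; lra).
      unfold Rdiv. apply Rmult_le_compat_r. left; apply Rinv_pos; lra. lra. }
    replace ((tau * INR L + cc t / tau) / 2) with (tau * INR L / 2 + cc t / (2 * tau)) in Hed by (field; lra).
    lra. Qed.


Definition d0 := gdist (adj_of nbrs) v (f []).
Definition Mc := INR ((D + 1) ^ L) * INR (4 ^ R0).
Definition Kc := 2 * INR d0 * (INR d0 + 1) + 8 * (INR L + 1) * INR L * Mc + 1.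

Lemma Mc_nonneg : 0 <= Mc.
Proof. unfold Mc. apply Rmult_le_pos; apply pos_INR. Qed.

Lemma count_Sub K : sumf cc (Sub [] K) <= INR L * Mc * DD.
Proof. unfold cc. rewrite (sumf_scal (INR L) Hs). rewrite Rmult_assoc.
  apply Rmult_le_compat_l. apply pos_INR. unfold Hs.
  apply (count_bound (Sub [] K) (fun s => ball nbrs (f s) L) SS GG Mc).
  - apply SS_nodup.
  - apply (G_out V nbrs Hsimple SS v N SS_ball).
  - intros; apply G_nonneg.
  - intros z. set (T := Sub [] K).
    eapply Rle_trans.
    { apply (sumf_le _ (fun s => ind (In z (ball nbrs (f s) L)) (INR ((D + 1) ^ L)))).
      intros s _. eapply Rle_trans. apply cnt_le. unfold ind. destruct excluded_middle_informative; [|lra].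
      apply le_INR. apply ball_length; auto. }
    rewrite sumf_ind_filter. unfold Mc. rewrite (Rmult_comm (INR ((D + 1) ^ L))).
    apply Rmult_le_compat_r. apply pos_INR. apply le_INR.
    destruct (filter (fun s => bdec (In z (ball nbrs (f s) L))) T) as [|t0 rest] eqn:Ef.
    + simpl; lia.
    + rewrite <- Ef. eapply Nat.le_trans.
      2: { apply (ball_length nbrsB 3 t0 R0). apply nbrsB_length. }
      apply filter_len. apply Sub_NoDup.
      assert (Hz : forall s, In s (filter (fun s => bdec (In z (ball nbrs (f s) L))) T) -> In z (ball nbrs (f s) L)).
      { intros s Hs'. apply filter_In in Hs'. destruct Hs' as [_ Hb]. unfold bdec in Hb.
        destruct excluded_middle_informative; auto; discriminate. }
      intros s Hs'. apply (qi_close t0 s z). apply Hz. rewrite Ef; simpl; auto. apply Hz; auto. Qed.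

Lemma main_bound : 0 < deg nbrs v /\ U V nbrs v (S N) v <= 1 - (5/8) / (2 * deg nbrs v * Kc).
Proof.
  destruct (INR_unbounded (C * (INR d0 + INR N + C))) as [K HK].
  assert (Hw1 : ww v = 1). { unfold w, W. destruct excluded_middle_informative; tauto. }
  assert (Hleaf : forall s, length s = K -> ww (f s) = 0).
  { intros s Hs'. destruct (Req_dec (ww (f s)) 0) as [e|ne]; auto. exfalso.
    apply (w_supp V nbrs Hsimple) in ne. destruct (ball_walk _ _ _ _ ne) as [n [Hn Hw]].
    assert (Wt : walkn (adj_of nbrs) (d0 + n) (f []) (f s)).
    { eapply walkn_app; eauto. apply walkn_rev. apply symY. apply dY_walk. }
    apply gdist_le in Wt. apply le_INR in Wt. rewrite plus_INR in Wt. apply le_INR in Hn.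
    destruct (Hqi [] s) as [Hl _]. apply qi_low in Hl; auto.
    pose proof (dB_root_ge s) as Hr. rewrite Hs' in Hr. apply le_INR in Hr.
    assert (C * (INR (gdist (adj_of nbrs) (f []) (f s)) + C) <= C * (INR d0 + INR N + C))
      by (apply Rmult_le_compat_l; lra). lra. }
  assert (Hdeg : 0 < deg nbrs v).
  { set (s := repeat false K). assert (Hs' : length s = K) by apply repeat_length.
    pose proof (Hleaf s Hs') as H0. pose proof (dY_walk v (f s)) as Hw.
    assert (Hne : v <> f s) by (intros e; rewrite <- e in H0; lra).
    destruct (walk_first _ _ _ _ Hw Hne) as [y Hy].
    unfold deg. unfold adj_of in Hy. destruct (nbrs v) as [|a l] eqn:E. destruct Hy.
    simpl length. rewrite S_INR. pose proof (pos_INR (length l)); lra. }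
  assert (HDir := Dir_bound V nbrs Hsimple SS SS_nodup v N SS_ball ltac:(apply SS_ball; apply (ball_mono _ _ 0); [lia|simpl; auto]) ltac:(lra)).
  pose proof (count_Sub K) as Hcount.
  set (t0 := / (4 * (INR d0 + 1))).
  assert (Ht0 : 0 < t0). { apply Rinv_pos. pose proof (pos_INR d0); lra. }
  set (t1 := / (8 * (INR L + 1))).
  assert (Ht1 : 0 < t1). { apply Rinv_pos. pose proof (pos_INR L); lra. }
  assert (Hinit : ww v - ww (f []) <= INR d0 * ((t0 + DD / t0) / 2)).
  { apply (walk_est v DD d0 (fun a _ => G_le_Dir V nbrs Hsimple SS v N SS_ball a) t0 Ht0 d0 v (f [])
      (dY_walk v (f [])) 0%nat); simpl; auto. }
  assert (Hgr : ww (f []) <= 2 * t1 * INR L + sumf cc (Sub [] K) / t1).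
  { apply greedy; [exact Ht1|]. intros s Hs'. apply Hleaf. simpl in Hs'. auto. }
  pose proof (pos_INR d0) as Pd0. pose proof (pos_INR L) as PL. pose proof Mc_nonneg as PM.
  assert (HDD : 0 <= DD). { apply sumf_nonneg; intros; apply G_nonneg. }
  assert (A1 : INR d0 * ((t0 + DD / t0) / 2) = INR d0 / (8 * (INR d0 + 1)) + 2 * INR d0 * (INR d0 + 1) * DD).
  { unfold t0. field. lra. }
  assert (A2 : INR d0 / (8 * (INR d0 + 1)) <= 1/8).
  { apply Rmult_le_reg_r with (r := 8 * (INR d0 + 1)). lra. field_simplify; lra. }
  assert (A3 : 2 * t1 * INR L = INR L / (4 * (INR L + 1))). { unfold t1. field. lra. }
  assert (A4 : INR L / (4 * (INR L + 1)) <= 1/4).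
  { apply Rmult_le_reg_r with (r := 4 * (INR L + 1)). lra. field_simplify; lra. }
  assert (A5 : sumf cc (Sub [] K) / t1 = 8 * (INR L + 1) * sumf cc (Sub [] K)). { unfold t1. field. lra. }
  assert (A6 : 8 * (INR L + 1) * sumf cc (Sub [] K) <= 8 * (INR L + 1) * (INR L * Mc * DD)).
  { apply Rmult_le_compat_l; lra. }
  assert (Hkey : 5/8 <= Kc * DD).
  { unfold Kc. nra. }
  assert (HKc : 0 < Kc). { unfold Kc. assert (0 <= INR d0 * (INR d0 + 1)) by nra.
    assert (0 <= (INR L + 1) * INR L * Mc) by (apply Rmult_le_pos; nra). nra. }
  split; auto.
  assert (Hu : (5/8) / (2 * deg nbrs v * Kc) <= 1 - U V nbrs v (S N) v).
  { apply Rmult_le_reg_r with (r := 2 * deg nbrs v * Kc). nra.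
    unfold Rdiv. rewrite Rmult_assoc, Rinv_l, Rmult_1_r by nra. nra. }
  lra. Qed.

End Main.

Lemma sum_n_U {V} (nbrs : V -> list V) v N :
  sum_n (fun n => first_hit nbrs v (S n) v) N = U V nbrs v (S N) v.
Proof. induction N.
  - rewrite sum_O. cbn [U]. exact (eq_sym (Rplus_0_l _)).
  - rewrite sum_Sn, IHN. change (U V nbrs v (S (S N)) v) with (U V nbrs v (S N) v + first_hit nbrs v (S (S N)) v).
    reflexivity. Qed.

Theorem proposition5p3 (V : Type) (nbrs : V -> list V)
  (Hsimple : simple_graph nbrs) (Hconn : connected nbrs)
  (Hbdd : bounded_degree nbrs)
  (f : BVert -> V) (C : R) (HC : 0 < C)
  (Hqi : forall u v : BVert,
      / C * INR (dB u v) - C <= INR (gdist (adj_of nbrs) (f u) (f v)) /\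
      INR (gdist (adj_of nbrs) (f u) (f v)) <= C * INR (dB u v) + C) :
  transient nbrs.
Proof.
  destruct Hbdd as [D HD].
  destruct (INR_unbounded (2 * C)) as [L HL].
  destruct (INR_unbounded (C * (2 * INR L + C))) as [R0 HR0].
  intros v. unfold return_prob.
  set (del := 5 / 8 / (2 * deg nbrs v * Kc V nbrs f D L R0 v)).
  assert (Hb : forall N, sum_n (fun n => first_hit nbrs v (S n) v) N <= 1 - del).
  { intros N. rewrite sum_n_U. apply (main_bound V nbrs Hsimple Hconn f C HC Hqi D HD L ltac:(lra) R0 ltac:(lra) v N). }
  assert (Hdel : 0 < del).
  { destruct (main_bound V nbrs Hsimple Hconn f C HC Hqi D HD L ltac:(lra) R0 ltac:(lra) v 0) as [Hd _].
    unfold del. apply Rdiv_lt_0_compat. lra. apply Rmult_lt_0_compat. lra.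
    unfold Kc. pose proof (pos_INR (d0 V nbrs f v)). pose proof (pos_INR L).
    pose proof (Mc_nonneg D L R0).
    assert (0 <= INR (d0 V nbrs f v) * (INR (d0 V nbrs f v) + 1)) by nra.
    assert (0 <= (INR L + 1) * INR L * Mc D L R0) by (apply Rmult_le_pos; nra). nra. }
  assert (Hl : Rbar_le (Lim_seq (sum_n (fun n => first_hit nbrs v (S n) v))) (Lim_seq (fun _ => 1 - del))).
  { apply Lim_seq_le_loc. exists 0%nat. intros; apply Hb. }
  rewrite Lim_seq_const in Hl. unfold Series.
  destruct (Lim_seq (sum_n (fun n => first_hit nbrs v (S n) v))); simpl in *; lra. Qed.
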